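(* Let $\mathcal{D}$ be a $\{K_3,K_4\}$-decomposition of $K_{18}$ with $\alpha=13$, let $W$ be the set of vertices $x$ with $\alpha_x\ge 2$, and for $i\in\{0,1,2,3\}$ let $t_i$ be the number of copies of $K_3$ in $\mathcal{D}$ having exactly $i$ vertices in $W$. Then $(t_0,t_1,t_2,t_3)\neq(0,0,11,2)$.
   Context: A $\{K_3,K_4\}$-decomposition of $K_v$ is a collection of subgraphs, each isomorphic to $K_3$ or $K_4$, such that every edge of $K_v$ lies in exactly one of them. $\alpha$ is the number of copies of $K_3$ in the decomposition, and for a vertex $x$, $\alpha_x$ is the number of copies of $K_3$ in the decomposition containing $x$. *)

(* Defs.v *)
From mathcomp Require Import all_boot.
Set Implicit Arguments. Unset Strict Implicit. Unset Printing Implicit Defensive.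

(* A copy of K_3 / K_4 in K_v is determined by its
   vertex set, a 3- or 4-subset; an edge {x,y} lies in the copy iff both
   endpoints are in the vertex set. *)
Definition is_K34_decomp (v : nat) (D : {set {set 'I_v}}) : Prop :=
  (forall B, B \in D -> #|B| = 3 \/ #|B| = 4) /\
  (forall x y : 'I_v, x != y ->
     #|[set B in D | (x \in B) && (y \in B)]| = 1).

Definition triangles (v : nat) (D : {set {set 'I_v}}) : {set {set 'I_v}} :=
  [set B in D | #|B| == 3].

Definition alpha (v : nat) (D : {set {set 'I_v}}) : nat := #|triangles D|.

Definition alpha_x (v : nat) (D : {set {set 'I_v}}) (x : 'I_v) : nat :=
  #|[set B in triangles D | x \in B]|.

Definition Wset (v : nat) (D : {set {set 'I_v}}) : {set 'I_v} :=
  [set x | 2 <= alpha_x D x].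

Definition t_count (v : nat) (D : {set {set 'I_v}}) (i : nat) : nat :=
  #|[set B in triangles D | #|B :&: Wset D| == i]|.

(* Main.v *)
Require Import Defs.
From mathcomp Require Import all_boot zify.
Set Implicit Arguments. Unset Strict Implicit. Unset Printing Implicit Defensive.

Lemma card_sum (T : finType) (A : {set T}) (P : pred T) :
  #|[set x in A | P x]| = \sum_(x in A) P x.
Proof.
rewrite -sum1_card [LHS]big_mkcond [RHS]big_mkcond /=.
by apply: eq_bigr => x _; rewrite inE; case: (x \in A); case: (P x).
Qed.

Lemma dcount (T : finType) (P : {set {set T}}) (S : {set T}) (f : {set T} -> nat) :
  \sum_(x in S) \sum_(B in P | x \in B) f B = \sum_(B in P) #|B :&: S| * f B.
Proof.
rewrite (exchange_big_dep (fun B => B \in P)) /=; last by move=> x B _ /andP[].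
apply: eq_bigr => B HB; rewrite -sum_nat_const; apply: eq_bigl => x.
by rewrite !inE HB andbC.
Qed.

Lemma dcount1 (T : finType) (P : {set {set T}}) (S : {set T}) :
  \sum_(x in S) #|[set B in P | x \in B]| = \sum_(B in P) #|B :&: S|.
Proof.
rewrite -[RHS](eq_bigr _ (fun B _ => muln1 _)) -dcount.
by apply: eq_bigr => x _; rewrite -sum1_card; apply: eq_bigl => B; rewrite inE.
Qed.

Lemma sum_const_in (T : finType) (A : {set T}) (F : T -> nat) k :
  (forall z : T, z \in A -> F z = k) -> \sum_(x in A) F x = #|A| * k.
Proof. by move=> H; rewrite -sum_nat_const; apply: eq_bigr. Qed.

Section Main.
Implicit Types (B C T U X Y R : {set 'I_18}) (x y : 'I_18).
Variable D : {set {set 'I_18}}.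
Hypothesis Hsz : forall B, B \in D -> #|B| = 3 \/ #|B| = 4.
Hypothesis Hedge : forall x y : 'I_18, x != y ->
     #|[set B in D | (x \in B) && (y \in B)]| = 1.

Lemma uniqB B C x y : B \in D -> C \in D -> x != y -> x \in B -> y \in B ->
  x \in C -> y \in C -> B = C.
Proof.
move=> HB HC xy xB yB xC yC; have /eqP/cards1P [E HE] := Hedge xy.
have : B \in [set E] by rewrite -HE inE HB xB yB.
have : C \in [set E] by rewrite -HE inE HC xC yC.
by rewrite !inE => /eqP -> /eqP ->.
Qed.

Lemma inter1 B C : B \in D -> C \in D -> B != C -> #|B :&: C| <= 1.
Proof.
move=> HB HC BC; rewrite leqNgt; apply/negP => /card_gt1P [x [y [xi yi xy]]].
move: xi yi; rewrite !inE => /andP[xB xC] /andP[yB yC].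
by move/eqP: BC; apply; apply: (uniqB HB HC xy).
Qed.

Definition blk (x y : 'I_18) : {set 'I_18} :=
  odflt set0 [pick B in D | (x \in B) && (y \in B)].

Lemma blkP x y : x != y -> [/\ blk x y \in D, x \in blk x y & y \in blk x y].
Proof.
move=> xy; rewrite /blk; case: pickP => [B /andP[HB /andP[]] //|H].
move: (Hedge xy); rewrite (_ : [set B in D | _] = set0) ?cards0 //.
by apply/setP => B; rewrite !inE; have := H B; rewrite /= => ->.
Qed.

Lemma lc x (S : {set 'I_18}) : x \notin S -> \sum_(B in D | x \in B) #|B :&: S| = #|S|.
Proof.
move=> xS; have E := dcount D S (fun B => (x \in B : nat)).
have E2 : \sum_(B in D | x \in B) #|B :&: S| = \sum_(B in D) #|B :&: S| * (x \in B).
  rewrite big_mkcondr /=; apply: eq_bigr => B _.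
  by case: (x \in B); rewrite ?muln1 ?muln0.
rewrite E2 -E.
rewrite -sum1_card; apply: eq_bigr => y yS.
transitivity #|[set B in D | (x \in B) && (y \in B)]|; last first.
  by apply: Hedge; apply: contraNneq xS => ->.
rewrite card_sum big_mkcondr /=; apply: eq_bigr => B _.
by case: (y \in B); case: (x \in B).
Qed.

Definition tri := triangles D.
Definition quad := [set B in D | #|B| == 4].
Definition W := Wset D.
Definition N := ~: W.
Definition c (B : {set 'I_18}) := #|B :&: W|.
Definition a x := alpha_x D x.
Definition triat x := [set B in tri | x \in B].
Definition quadat x := [set B in quad | x \in B].

Lemma lc_split x (S : {set 'I_18}) : x \notin S ->
  \sum_(B in triat x) #|B :&: S| + \sum_(B in quadat x) #|B :&: S| = #|S|.
Proof.
move=> xS; rewrite -(lc xS).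
rewrite [RHS](bigID (fun B : {set 'I_18} => #|B| == 3)) /=.
congr (_ + _); apply: eq_bigl => B; rewrite !inE.
  by case: (B \in D); case: (#|B| == 3); case: (x \in B).
case HB: (B \in D) => //=; case: (Hsz HB) => ->; by case: (x \in B).
Qed.


Lemma triP B : B \in tri -> B \in D /\ #|B| = 3.
Proof. by rewrite !inE => /andP[-> /eqP]. Qed.
Lemma quadP B : B \in quad -> B \in D /\ #|B| = 4.
Proof. by rewrite !inE => /andP[-> /eqP]. Qed.


Lemma deg x : 2 * a x + 3 * #|quadat x| = 17.
Proof.
have := @lc_split x [set~ x]; rewrite !inE eqxx => /(_ isT).
rewrite cardsC1 card_ord /= => E; rewrite -[in RHS]E.
rewrite (@sum_const_in _ _ _ 2) ?(@sum_const_in _ _ _ 3).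
- by rewrite mulnC [3 * _]mulnC.
- move=> B; rewrite inE => /andP[/quadP[_ HB] xB].
  by move: (cardsD1 x B); rewrite HB xB setDE => [[]].
- move=> B; rewrite inE => /andP[/triP[_ HB] xB].
  by move: (cardsD1 x B); rewrite HB xB setDE => [[]].
Qed.

Hypothesis Halpha : alpha D = 13.
Hypothesis Ht0 : t_count D 0 = 0.
Hypothesis Ht1 : t_count D 1 = 0.
Hypothesis Ht2 : t_count D 2 = 11.
Hypothesis Ht3 : t_count D 3 = 2.

Lemma inW x : (x \in W) = (2 <= a x).
Proof. by rewrite /W /Wset inE. Qed.

Lemma aN x : x \in N -> a x = 1.
Proof. rewrite /N inE inW => H; have := deg x; lia. Qed.

Lemma cT B : B \in tri -> c B = 2 \/ c B = 3.
Proof.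
move=> HB; have [HD H3] := triP HB.
have cle : c B <= 3 by rewrite -H3 /c subset_leq_card // subsetIl.
have c0 : c B != 0.
  apply/negP => /eqP E; move: Ht0; rewrite /t_count.
  move/eqP; rewrite cards_eq0 => /eqP/setP/(_ B); rewrite !inE.
  by rewrite HD H3 -/W -/(c B) E.
have c1 : c B != 1.
  apply/negP => /eqP E; move: Ht1; rewrite /t_count.
  move/eqP; rewrite cards_eq0 => /eqP/setP/(_ B); rewrite !inE.
  by rewrite HD H3 -/W -/(c B) E.
lia.
Qed.

Lemma cardsIC (B : {set 'I_18}) : #|B :&: W| + #|B :&: N| = #|B|.
Proof. by rewrite /N -setDE cardsID. Qed.

Lemma cardN : #|N| = 11.
Proof.
have := dcount1 tri N.
rewrite (eq_bigr (fun _ => 1)); last by move=> x /aN.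
rewrite sum1_card => ->.
rewrite (eq_bigr (fun B => (c B == 2) : nat)); last first.
  move=> B HB; have := cardsIC B; rewrite (triP HB).2 -/(c B).
  by case: (cT HB) => -> /=; lia.
by rewrite -card_sum; exact: Ht2.
Qed.

Lemma cardW : #|W| = 7.
Proof. have := cardsC W; rewrite -/N cardN card_ord; lia. Qed.

Lemma sumaW : \sum_(x in W) a x = 28.
Proof.
have := dcount1 tri W; rewrite -/(a _) => ->.
rewrite (eq_bigr (fun B => 2 + (c B == 3))); last first.
  by move=> B HB; rewrite -/(c B); case: (cT HB) => ->.
rewrite big_split /= sum_nat_const -card_sum.
by rewrite -/(t_count D 3) Ht3 -/(alpha D) Halpha.
Qed.

Lemma aW x : x \in W -> a x = 4.
Proof.
move=> xW.
have ge4 : forall y, y \in W -> 4 <= a y.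
  by move=> y; rewrite inW => H; have := deg y; lia.
have E : \sum_(y in W) (a y - 4) = 0.
  have : \sum_(y in W) a y = \sum_(y in W) (a y - 4) + \sum_(y in W) 4.
    by rewrite -big_split; apply: eq_bigr => y /ge4 H /=; rewrite subnK.
  by rewrite sumaW sum_nat_const cardW; lia.
move/eqP: E; rewrite sum_nat_eq0 => /forallP/(_ x); rewrite xW /= => H.
by have := ge4 _ xW; lia.
Qed.

Lemma bW x : x \in W -> #|quadat x| = 3.
Proof. by move=> /aW H; have := deg x; lia. Qed.
Lemma bN x : x \in N -> #|quadat x| = 5.
Proof. by move=> /aN H; have := deg x; lia. Qed.


Definition T3 := [set B in tri | c B == 3].
Definition q x := #|[set B in T3 | x \in B]|.
Definition e x := \sum_(B in quadat x) (c B).-1.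

Lemma cBx B x : x \in B -> x \in W -> #|B :&: (W :\ x)| = (c B).-1.
Proof.
move=> xB xW; rewrite setDE setIA -setDE.
by have := cardsD1 x (B :&: W); rewrite inE xB xW /= -/(c B) => ->.
Qed.

Lemma qE x : q x = \sum_(B in triat x) (c B == 3).
Proof.
rewrite /q -card_sum; apply: eq_card => B; rewrite !inE.
by case: (B \in D); case: (x \in B); case: (#|B| == 3); case: (c B == 3).
Qed.

Lemma eqW x : x \in W -> e x + q x = 2.
Proof.
move=> xW; have := @lc_split x (W :\ x); rewrite !inE eqxx => /(_ isT).
have c6 : #|W :\ x| = 6.
  by have := cardsD1 x W; rewrite xW cardW /= add1n => -[<-].
rewrite c6 => E.
have E1 : \sum_(B in quadat x) #|B :&: (W :\ x)| = e x.
  by apply: eq_bigr => B; rewrite inE => /andP[_ xB]; rewrite cBx.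
have E2 : \sum_(B in triat x) #|B :&: (W :\ x)| = a x + q x.
  rewrite qE /a /alpha_x -/(triat x) -sum1_card -big_split /=.
  apply: eq_bigr => B; rewrite inE => /andP[HB xB]; rewrite cBx //.
  by case: (cT HB) => ->.
move: E; rewrite E1 E2 aW //; lia.
Qed.

Lemma cardT3 : #|T3| = 2.
Proof. exact: Ht3. Qed.

Lemma sumq : \sum_(x in W) q x = 6.
Proof.
rewrite /q dcount1 (@sum_const_in _ _ _ 3) ?cardT3 //.
by move=> B; rewrite inE => /andP[_ /eqP].
Qed.

Lemma sume : \sum_(x in W) e x = \sum_(B in quad) c B * (c B).-1.
Proof.
rewrite -dcount; apply: eq_bigr => x _; apply: eq_bigl => B; by rewrite inE.
Qed.

Lemma sume8 : \sum_(B in quad) c B * (c B).-1 = 8.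
Proof.
rewrite -sume.
have : \sum_(x in W) e x + \sum_(x in W) q x = 14.
  by rewrite -big_split /= (@sum_const_in _ _ _ 2) ?cardW // => x /eqW.
rewrite sumq; lia.
Qed.

Lemma e_ge x B : B \in quadat x -> (c B).-1 <= e x.
Proof. by move=> HB; rewrite /e (bigD1 B) //= leq_addr. Qed.

Lemma T3sub T : T \in T3 -> T \subset W.
Proof.
rewrite inE => /andP[HT /eqP cTW]; have [_ HT3] := triP HT.
have : T :&: W == T by rewrite eqEcard subsetIl /= -/(c T) cTW HT3.
by move/eqP/setIidPl.
Qed.

Lemma T3D T : T \in T3 -> T \in D.
Proof. by rewrite inE => /andP[/triP[]]. Qed.

Lemma c_le2 B : B \in quad -> c B <= 2.
Proof.
move=> HB; rewrite leqNgt; apply/negP => c3.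
have [x xBW] : exists x, x \in B :&: W.
  by apply/set0Pn; rewrite -card_gt0 -/(c B); lia.
have xB : x \in B by move: xBW; rewrite inE => /andP[].
have xW : x \in W by move: xBW; rewrite inE => /andP[].
have := e_ge (B := B) (x := x); rewrite inE HB xB => /(_ isT).
have := eqW xW => E1 E2.
have c3' : c B = 3 by lia.
have q0 : forall y, y \in B :&: W -> forall T, T \in T3 -> y \notin T.
  move=> y yBW T HT; apply/negP => yT.
  have yB : y \in B by move: yBW; rewrite inE => /andP[].
  have yW : y \in W by move: yBW; rewrite inE => /andP[].
  have := e_ge (B := B) (x := y); rewrite inE HB yB c3' => /(_ isT).
  have := eqW yW; rewrite /q.
  have : 0 < #|[set B0 in T3 | y \in B0]|.
    by apply/card_gt0P; exists T; rewrite inE HT yT.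
  move: (e y) #|[set B0 in T3 | y \in B0]| => u v; clear; lia.
have /eqP/cards2P [T [T' [TT' ET]]] := cardT3.
have HT : T \in T3 by rewrite ET !inE eqxx.
have HT' : T' \in T3 by rewrite ET !inE eqxx orbT.
have sub : forall U, U \in T3 -> U \subset W :\: (B :&: W).
  move=> U HU; apply/subsetP => y yU; rewrite inE (subsetP (T3sub HU)) // andbT.
  by apply/negP => yBW; have := q0 y yBW U HU; rewrite yU.
have cU : #|T :|: T'| <= 4.
  have : T :|: T' \subset W :\: (B :&: W) by rewrite subUset !sub.
  move/subset_leq_card; rewrite cardsD.
  rewrite (_ : W :&: (B :&: W) = B :&: W); last by rewrite setIC -setIA setIid.
  by rewrite -/(c B) c3' cardW.
have h1 : #|T| = 3 by case/setIdP: HT => /triP[].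
have h2 : #|T'| = 3 by case/setIdP: HT' => /triP[].
have := inter1 (T3D HT) (T3D HT') TT'.
have := cardsU T T'; rewrite h1 h2.
move: #|T :|: T'| #|T :&: T'| cU => u v; clear; lia.
Qed.


Definition Qk k := [set B in quad | c B == k].
Definition n k y := #|[set B in Qk k | y \in B]|.

Lemma nE k y : n k y = \sum_(B in quadat y) (c B == k).
Proof.
rewrite /n -card_sum; apply: eq_card => B; rewrite !inE.
by case: (B \in D); case: (y \in B); case: (#|B| == 4); case: (c B == k).
Qed.

Lemma csub B : c B = #|B| -> B \subset W.
Proof.
move=> H; have : B :&: W == B by rewrite eqEcard subsetIl /= -/(c B) H.
by move/eqP/setIidPl.
Qed.

Lemma inN y : (y \in N) = (y \notin W).
Proof. by rewrite inE. Qed.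

Lemma triN y : y \in N -> exists T, [/\ triat y = [set T], T \in tri, y \in T & c T = 2].
Proof.
move=> yN; have := aN yN; rewrite /a /alpha_x -/(triat y) => /eqP/cards1P [T ET].
have : T \in triat y by rewrite ET inE.
rewrite inE => /andP[HT yT]; exists T; split => //.
case: (cT HT) => // H3; exfalso.
have [_ h3] := triP HT; move: (csub (etrans H3 (esym h3))) => /subsetP/(_ y yT) yW.
by move: yN; rewrite inN yW.
Qed.

Lemma sumcN y : y \in N -> \sum_(B in quadat y) c B = 5.
Proof.
move=> yN; have := @lc_split y W; rewrite -inN => /(_ yN).
have [T [ET _ _ cT2]] := triN yN.
rewrite ET big_set1 cardW -/(c T) cT2 /c; lia.
Qed.

Lemma n0n2 y : y \in N -> n 0 y = n 2 y.
Proof.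
move=> yN.
have : \sum_(B in quadat y) (c B + (c B == 0)) = \sum_(B in quadat y) (1 + (c B == 2)).
  apply: eq_bigr => B; rewrite inE => /andP[HB _]; have := c_le2 HB.
  by case: (c B) => [|[|[|]]].
rewrite !big_split /= sumcN // sum1_card bN // -!nE; lia.
Qed.

Lemma cardQ2 : #|Qk 2| = 4.
Proof.
have := sume8.
rewrite (eq_bigr (fun B => (c B == 2) + (c B == 2))); last first.
  by move=> B /c_le2; case: (c B) => [|[|[|]]].
rewrite big_split /= -card_sum => H.
have : #|Qk 2| + #|Qk 2| = 8 by exact: H.
clear; move: #|Qk 2| => m; lia.
Qed.

Lemma sumn2 : \sum_(y in N) n 2 y = 8.
Proof.
rewrite /n dcount1 (@sum_const_in _ _ _ 2) ?cardQ2 //.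
move=> B; rewrite inE => /andP[/quadP[_ h4] /eqP h2].
by have := cardsIC B; rewrite h4 -/(c B) h2; lia.
Qed.

Lemma cardQ0 : #|Qk 0| = 2.
Proof.
have : \sum_(y in N) n 0 y = 4 * #|Qk 0|.
  rewrite /n dcount1 (@sum_const_in _ _ _ 4) 1?mulnC //.
  move=> B; rewrite inE => /andP[/quadP[_ h4] /eqP h2].
  by have := cardsIC B; rewrite h4 -/(c B) h2; lia.
rewrite (eq_bigr _ (fun y yN => n0n2 yN)) sumn2; lia.
Qed.


Lemma share2 B C x y : B \in D -> C \in D -> x != y -> x \in B -> y \in B ->
  x \in C -> y \in C -> c B != c C -> False.
Proof. by move=> HB HC xy xB yB xC yC; rewrite (uniqB HB HC xy xB yB xC yC) eqxx. Qed.

Lemma cardBN B : B \in quad -> #|B :&: N| = 4 - c B.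
Proof. by case/quadP => _ h4; have := cardsIC B; rewrite h4 -/(c B); lia. Qed.

Lemma Qk2N B : B \in Qk 2 -> #|B :&: N| = 2.
Proof. by case/setIdP => HB /eqP h; rewrite cardBN // h. Qed.

Lemma Q2other B y : B \in Qk 2 -> y \in B -> y \in N ->
  exists u, [/\ u \in B, u \in N & u != y].
Proof.
move=> HB yB yN; have := Qk2N HB; have := cardsD1 y (B :&: N); rewrite inE yB yN /=.
move=> -> /eqP; rewrite add1n eqSS => /cards1P [u Eu].
have : u \in (B :&: N) :\ y by rewrite Eu inE.
by rewrite in_setD1 in_setI => /and3P[uy uB uN]; exists u.
Qed.

Lemma QkD k B : B \in Qk k -> B \in D.
Proof. by case/setIdP => /quadP[]. Qed.
Lemma Qkc k B : B \in Qk k -> c B = k.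
Proof. by case/setIdP => _ /eqP. Qed.
Lemma Qkq k B : B \in Qk k -> B \in quad.
Proof. by case/setIdP. Qed.

Lemma sum_eq_le (T : finType) (A : {set T}) (f g : T -> nat) :
  (forall z, z \in A -> f z <= g z) -> \sum_(z in A) g z <= \sum_(z in A) f z ->
  forall z, z \in A -> f z = g z.
Proof.
move=> Hle Hs z zA.
have E : \sum_(w in A) g w = \sum_(w in A) f w + \sum_(w in A) (g w - f w).
  by rewrite -big_split; apply: eq_bigr => w wA /=; rewrite subnKC // Hle.
have : \sum_(w in A) (g w - f w) == 0.
  by move: Hs; rewrite E; move: (\sum_(w in A) f w) (\sum_(w in A) (g w - f w)) => u v; lia.
rewrite sum_nat_eq0 => /forallP/(_ z); rewrite zA /= => /eqP.
by have := Hle z zA; lia.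
Qed.

Section KK.
Variables K K' : {set 'I_18}.
Hypothesis HK : Qk 0 = [set K; K'].
Hypothesis KK' : K != K'.

Lemma KQ0 : K \in Qk 0.
Proof. by rewrite HK !inE eqxx. Qed.
Lemma K'Q0 : K' \in Qk 0.
Proof. by rewrite HK !inE eqxx orbT. Qed.

Lemma KN y : y \in K -> y \in N.
Proof.
move=> yK; have := Qkc KQ0; rewrite /c => /eqP; rewrite cards_eq0 => /eqP/setP/(_ y).
by rewrite !inE yK /= => ->.
Qed.

Lemma Q0mem B y : B \in Qk 0 -> y \in B -> y \in K :|: K'.
Proof. by rewrite HK !inE => /orP[] /eqP <- ->; rewrite ?orbT. Qed.

Lemma Q2N B u : B \in Qk 2 -> u \in B -> u \in N -> u \in K :|: K'.
Proof.
move=> HB uB uN; have : 0 < n 2 u by apply/card_gt0P; exists B; rewrite inE HB uB.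
rewrite -n0n2 // => /card_gt0P [B' ]; rewrite inE => /andP[HB' uB'].
exact: Q0mem HB' uB'.
Qed.

Lemma Q2K B y u : B \in Qk 2 -> y \in B -> y \in K -> u \in B -> u \in N -> u != y ->
  u \in K'.
Proof.
move=> HB yB yK uB uN uy; have := Q2N HB uB uN; rewrite inE => /orP[uK|] //.
exfalso; apply: (share2 (QkD HB) (QkD KQ0) uy uB yB uK yK).
by rewrite (Qkc HB) (Qkc KQ0).
Qed.

End KK.


Section KK2.
Variables K K' : {set 'I_18}.
Hypothesis HK : Qk 0 = [set K; K'].
Hypothesis KK' : K != K'.
Let HKs : Qk 0 = [set K'; K].
Proof. by rewrite HK setUC. Qed.
Let KKs : K' != K.
Proof. by rewrite eq_sym. Qed.

Lemma disj y : y \in K -> y \in K' -> False.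
Proof.
move=> yK yK'.
have : 0 < n 0 y by apply/card_gt0P; exists K; rewrite inE (KQ0 HK) yK.
rewrite n0n2 ?(KN HK) // => /card_gt0P [B]; rewrite inE => /andP[HB yB].
have [u [uB uN uy]] := Q2other HB yB (KN HK yK).
have uK' := Q2K HK HB yB yK uB uN uy.
have uK := Q2K HKs HB yB yK' uB uN uy.
move/eqP: KK'; apply.
exact: (uniqB (QkD (KQ0 HK)) (QkD (K'Q0 HK)) uy uK yK uK' yK').
Qed.

Lemma n0K y : y \in K -> n 0 y = 1.
Proof.
move=> yK; apply/eqP/cards1P; exists K; apply/setP => B; rewrite in_set1 in_set.
apply/andP/eqP => [[HB yB]|->]; last by rewrite (KQ0 HK) yK.
move: HB; rewrite HK !inE => /orP[/eqP //|/eqP EB].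
by exfalso; apply: (disj yK); rewrite -EB.
Qed.

Lemma Q2uniq y B C : y \in K -> B \in Qk 2 -> C \in Qk 2 -> y \in B -> y \in C -> B = C.
Proof.
move=> yK HB HC yB yC; have := n0K yK; rewrite n0n2 ?(KN HK) //.
move/eqP/cards1P => [E HE].
have : B \in [set E] by rewrite -HE inE HB yB.
have : C \in [set E] by rewrite -HE inE HC yC.
by rewrite !inE => /eqP -> /eqP ->.
Qed.

Lemma partner y : y \in K -> exists B p, [/\ B \in Qk 2, y \in B, p \in B & p \in K'].
Proof.
move=> yK; have := n0K yK; rewrite n0n2 ?(KN HK) // => H.
have : 0 < n 2 y by rewrite H.
move=> /card_gt0P [B]; rewrite inE => /andP[HB yB].
have [u [uB uN uy]] := Q2other HB yB (KN HK yK).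
by exists B, u; split => //; apply: (Q2K HK HB yB yK uB uN uy).
Qed.

Lemma KKsubN : K :|: K' \subset N.
Proof. by apply/subsetP => y; rewrite inE => /orP[/(KN HK)|/(KN HKs)]. Qed.

Lemma cardK : #|K| = 4.
Proof. by have [_ ] := quadP (Qkq (KQ0 HK)). Qed.

Lemma KK0 : K :&: K' = set0.
Proof. by apply/setP => y; rewrite !inE; apply/negP => /andP[/disj]. Qed.

Lemma cardKK : #|K :|: K'| = 8.
Proof.
have := cardsU K K'; rewrite KK0 cards0 cardK.
by have [_ ->] := quadP (Qkq (K'Q0 HK)).
Qed.

Definition Z := N :\: (K :|: K').

Lemma cardZ : #|Z| = 3.
Proof.
rewrite /Z cardsD cardN (_ : N :&: (K :|: K') = K :|: K') ?cardKK //.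
by apply/setIidPr; exact: KKsubN.
Qed.

Lemma ZN z : z \in Z -> z \in N.
Proof. by rewrite inE => /andP[]. Qed.
Lemma ZK z : z \in Z -> z \notin K.
Proof. by rewrite !inE => /andP[/norP[]]. Qed.
Lemma ZK' z : z \in Z -> z \notin K'.
Proof. by rewrite !inE => /andP[/norP[]]. Qed.


Lemma noKZZ k B : k \in K -> B \in quad -> k \in B -> B :&: K' = set0 -> B != K -> False.
Proof.
move=> kK HB kB BK'0 BK.
have kN := KN HK kK.
have kK' : k \notin K' by apply/negP => /(disj kK).
have := @lc_split k K' kK'; have [_ ->] := quadP (Qkq (K'Q0 HK)).
have [T [ET HT kT cT2]] := triN kN.
rewrite ET big_set1.
have T0 : #|T :&: K'| = 0.
  have h1 : #|T :&: N| = 1.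
    have := cardsIC T; rewrite (triP HT).2 -/(c T) cT2.
    by move: #|T :&: N| => m; clear; lia.
  have sub : T :&: K' \subset (T :&: N) :\ k.
    apply/subsetP => w; rewrite in_setD1 !in_setI => /andP[wT wK'].
    rewrite wT (KN HKs wK') !andbT; apply: contraNneq kK' => <-; exact: wK'.
  have := subset_leq_card sub; have := cardsD1 k (T :&: N).
  rewrite in_setI kT kN h1 /=.
  by move: #|T :&: K'| #|T :&: N :\ k| => u v; clear; lia.
rewrite T0 add0n.
have le : forall B', B' \in quadat k -> #|B' :&: K'| <= ((B' != K) && (B' != B)).
  move=> B' HB'; have [HB'D _] := quadP (setIdP HB').1.
  have kB' : k \in B' by case/setIdP: HB'.
  case: (eqVneq B' K) => [->|B'K]; first by rewrite KK0 cards0.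
  case: (eqVneq B' B) => [->|B'B]; first by rewrite BK'0 cards0.
  apply: inter1 => //; first exact: QkD (K'Q0 HK).
  by apply: contraNneq kK' => <-.
have : \sum_(B' in quadat k) #|B' :&: K'| <= \sum_(B' in quadat k) ((B' != K) && (B' != B)).
  by apply: leq_sum.
rewrite -card_sum.
have -> : [set x in quadat k | (x != K) && (x != B)] = quadat k :\: [set K; B].
  apply/setP => x; rewrite in_set in_setD in_set2.
  by case: (x \in quadat k); case: (x == K); case: (x == B).
rewrite cardsD (_ : quadat k :&: [set K; B] = [set K; B]); last first.
  apply/setIidPr; apply/subsetP => x; rewrite in_set2 => /orP[]/eqP->.
    by rewrite in_set (Qkq (KQ0 HK)) kK.
  by rewrite in_set HB kB.
rewrite cards2 (eq_sym K B) BK /= bN //.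
by move: (\sum_(i in quadat k) #|i :&: K'|) => m; clear; lia.
Qed.

End KK2.


Section KK3.
Variables K K' : {set 'I_18}.
Hypothesis HK : Qk 0 = [set K; K'].
Hypothesis KK' : K != K'.
Let HKs : Qk 0 = [set K'; K].
Proof. by rewrite HK setUC. Qed.
Let KKs : K' != K.
Proof. by rewrite eq_sym. Qed.

Lemma ZKK z : z \in Z K K' -> z \notin K :|: K'.
Proof. by rewrite !inE => /andP[]. Qed.

Lemma ZeqN z : z \in N -> z \notin K -> z \notin K' -> z \in Z K K'.
Proof. by move=> zN zK zK'; rewrite inE zN in_setU negb_or zK zK'. Qed.

Lemma BKK_le1 B z1 z2 : z1 \in Z K K' -> z2 \in Z K K' -> z1 != z2 -> z1 \in B -> z2 \in B ->
  #|B :&: N| <= 3 -> #|B :&: (K :|: K')| <= 1.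
Proof.
move=> z1Z z2Z z12 z1B z2B BN3.
have sub : [set z1; z2] :|: (B :&: (K :|: K')) \subset B :&: N.
  apply/subsetP => v; rewrite in_setU in_set2 => /orP[/orP[]/eqP->|].
  - by rewrite in_setI z1B (ZN z1Z).
  - by rewrite in_setI z2B (ZN z2Z).
  rewrite in_setI => /andP[vB vKK]; rewrite in_setI vB.
  exact: (subsetP (KKsubN HK)).
have dis : [set z1; z2] :&: (B :&: (K :|: K')) = set0.
  apply/setP => v; rewrite in_set0 in_setI in_set2; apply/negP => /andP[/orP[]/eqP-> ].
    by rewrite in_setI (negbTE (ZKK z1Z)) andbF.
  by rewrite in_setI (negbTE (ZKK z2Z)) andbF.
have := subset_leq_card sub; rewrite cardsU dis cards0 cards2 z12 /= subn0.
by move: #|B :&: (K :|: K')| #|B :&: N| BN3 => u v; clear; lia.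
Qed.


Lemma Qblk z1 z2 : z1 \in Z K K' -> z2 \in Z K K' -> z1 != z2 ->
  [/\ blk z1 z2 \in quad, c (blk z1 z2) = 1 & Z K K' \subset blk z1 z2].
Proof.
move=> z1Z z2Z z12; have [BD z1B z2B] := blkP z12; set B := blk z1 z2 in BD z1B z2B *.
have BN2 : 2 <= #|B :&: N|.
  have : [set z1; z2] \subset B :&: N.
    apply/subsetP => v; rewrite in_set2 => /orP[]/eqP->; by rewrite in_setI ?z1B ?z2B ?(ZN z1Z) ?(ZN z2Z).
  by move/subset_leq_card; rewrite cards2 z12.
have HBq : B \in quad.
  case: (Hsz BD) => h; last by rewrite inE BD h.
  have HBt : B \in tri by rewrite /tri /triangles inE BD h.
  exfalso; have := cardsIC B; rewrite h -/(c B).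
  by case: (cT HBt) => ->; move: #|B :&: N| BN2 => u; clear; lia.
have c2 := c_le2 HBq.
have c0 : c B != 0.
  apply/negP => /eqP h; have HB0 : B \in Qk 0 by rewrite inE HBq h.
  by have := Q0mem HK HB0 z1B; rewrite (negbTE (ZKK z1Z)).
have c2' : c B != 2.
  apply/negP => /eqP h; have HB2 : B \in Qk 2 by rewrite inE HBq h.
  by have := Q2N HK HB2 z1B (ZN z1Z); rewrite (negbTE (ZKK z1Z)).
have c1 : c B = 1 by move: (c B) c2 c0 c2' => u; clear; case: u => [|[|[|]]].
have BN3 : #|B :&: N| = 3 by rewrite cardBN // c1.
have le1 := BKK_le1 z1Z z2Z z12 z1B z2B (eq_leq BN3).
have noK : forall (P P' : {set 'I_18}), Qk 0 = [set P; P'] -> P != P' ->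
    K :|: K' = P :|: P' -> forall v, v \in B -> v \in P -> False.
  move=> P P' HP PP' EKK v vB vP.
  have BP'0 : B :&: P' = set0.
    apply/setP => w; rewrite in_set0 in_setI; apply/negP => /andP[wB wP'].
    have : 1 < #|B :&: (K :|: K')|.
      apply/card_gt1P; exists v, w; rewrite !in_setI vB wB EKK !in_setU vP wP' orbT.
      split => //; apply/negP => /eqP vw; apply: (disj HP PP' vP); rewrite vw //.
    by move: #|B :&: (K :|: K')| le1 => u; clear; lia.
  apply: (noKZZ HP PP' vP HBq vB BP'0).
  apply/negP => /eqP BP; have := z1B; rewrite BP => z1P.
  by have := ZKK z1Z; rewrite EKK in_setU z1P.
have sub : B :&: N \subset Z K K'.
  apply/subsetP => v; rewrite in_setI => /andP[vB vN]; apply: ZeqN => //.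
    by apply/negP => vK; apply: (noK K K' HK KK' (erefl _) v vB vK).
  by apply/negP => vK; apply: (noK K' K HKs KKs (setUC _ _) v vB vK).
have : B :&: N == Z K K' by rewrite eqEcard sub /= BN3 (cardZ HK KK').
by move/eqP <-; rewrite HBq c1 subsetIl.
Qed.

End KK3.


Section KK4.
Variables K K' : {set 'I_18}.
Hypothesis HK : Qk 0 = [set K; K'].
Hypothesis KK' : K != K'.
Let HKs : Qk 0 = [set K'; K].
Proof. by rewrite HK setUC. Qed.
Let KKs : K' != K.
Proof. by rewrite eq_sym. Qed.

Lemma WnotN x : x \in W -> x \in N -> False.
Proof. by rewrite inN => ->. Qed.

Lemma neqWN x y : x \in W -> y \in N -> x != y.
Proof. by move=> xW yN; apply/negP => /eqP xy; apply: (WnotN xW); rewrite xy. Qed.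

Lemma Xquad A R x0 s : A \in W -> x0 \in W -> A != x0 -> R \in quad -> A \in R -> x0 \in R ->
  s \in N -> s \notin R -> blk x0 s \in tri -> blk A s \in quadat A /\ blk A s != R.
Proof.
move=> AW x0W Ax0 HR AR x0R sN sR Ht.
have [XD AX sX] := blkP (neqWN AW sN).
have [_ x0T sT] := blkP (neqWN x0W sN).
split; last by apply/negP => /eqP E; move: sR; rewrite -E sX.
rewrite in_set AX andbT; case: (Hsz XD) => h; last by rewrite inE XD h.
exfalso.
have HXt : blk A s \in tri by rewrite /tri /triangles inE XD h.
have [T [ET _ _ _]] := triN sN.
have : blk A s \in triat s by rewrite in_set HXt sX.
have : blk x0 s \in triat s by rewrite in_set Ht sT.
rewrite ET !in_set1 => /eqP E1 /eqP E2.
have x0X : x0 \in blk A s by rewrite E2 -E1.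
have [RD h4] := quadP HR.
have := uniqB XD RD Ax0 AX x0X AR x0R.
by move=> E; move: h; rewrite E h4.
Qed.

Lemma claim A R k p k' p' C C' :
  A \in W -> R \in Qk 2 -> A \in R ->
  k \in K -> k' \in K -> p \in K' -> p' \in K' -> p != p' ->
  C \in Qk 2 -> C' \in Qk 2 -> k \in C -> p \in C -> k' \in C' -> p' \in C' ->
  (forall B, B \in quadat A -> [\/ B = R, B = blk A k | B = blk A k']) ->
  blk A p' \in quadat A -> blk A p' != R ->
  p \notin blk A k.
Proof.
move=> AW HR AR kK k'K pK' p'K' pp' HC HC' kC pC k'C' p'C' Hq Hp'q Hp'R.
apply/negP => pX.
have kN := KN HK kK; have k'N := KN HK k'K.
have pN := KN HKs pK'; have p'N := KN HKs p'K'.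
have kp : k != p by apply/negP => /eqP E; apply: (disj HK KK' kK); rewrite E.
have k'p' : k' != p' by apply/negP => /eqP E; apply: (disj HK KK' k'K); rewrite E.
have [XkD AXk kXk] := blkP (neqWN AW kN).
have [Xk'D AXk' k'Xk'] := blkP (neqWN AW k'N).
have [Xp'D AXp' p'Xp'] := blkP (neqWN AW p'N).
have EC : blk A k = C := uniqB XkD (QkD HC) kp kXk pX kC pC.
have EC' : blk A k' = C'.
  case: (Hq _ Hp'q) => [E|E|E].
  - by move/eqP: Hp'R.
  - exfalso; rewrite EC in E.
    apply: (share2 (QkD HC) (QkD (K'Q0 HK)) pp' pC _ pK' p'K'); first by rewrite -E.
    by rewrite (Qkc HC) (Qkc (K'Q0 HK)).
  - by apply: (uniqB Xk'D (QkD HC') k'p' k'Xk' _ k'C' p'C'); rewrite -E.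
have : e A = 3.
  rewrite /e (@sum_const_in _ _ _ 1); first by rewrite bW.
  move=> B HB; case: (Hq _ HB) => ->; rewrite ?EC ?EC' ?(Qkc HR) ?(Qkc HC) ?(Qkc HC') //.
have := eqW AW; move: (e A) (q A) => u v; clear; lia.
Qed.


Lemma atA A R x0 k3 k4 p3 p4 C3 C4 :
  A \in W -> x0 \in W -> A != x0 -> R \in Qk 2 -> A \in R -> x0 \in R ->
  k3 \in K -> k4 \in K -> k3 != k4 -> p3 \in K' -> p4 \in K' -> p3 != p4 ->
  C3 \in Qk 2 -> C4 \in Qk 2 -> k3 \in C3 -> p3 \in C3 -> k4 \in C4 -> p4 \in C4 ->
  (forall s, s \in [set k3; k4; p3; p4] -> s \notin R /\ blk x0 s \in tri) ->
  A \in blk k4 p3 /\ A \in blk k3 p4.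
Proof.
move=> AW x0W Ax0 HR AR x0R k3K k4K k34 p3K' p4K' p34 HC3 HC4 k3C p3C k4C p4C G.
have HRq := Qkq HR.
have Xq : forall s, s \in [set k3; k4; p3; p4] -> s \in N ->
    blk A s \in quadat A /\ blk A s != R.
  by move=> s sS sN; have [sR st] := G s sS; apply: (Xquad AW x0W Ax0 HRq AR x0R sN sR st).
have k3N := KN HK k3K; have k4N := KN HK k4K.
have p3N := KN HKs p3K'; have p4N := KN HKs p4K'.
have m3 : k3 \in [set k3; k4; p3; p4] by rewrite !inE eqxx.
have m4 : k4 \in [set k3; k4; p3; p4] by rewrite !inE eqxx !orbT.
have mp3 : p3 \in [set k3; k4; p3; p4] by rewrite !inE eqxx !orbT.
have mp4 : p4 \in [set k3; k4; p3; p4] by rewrite !inE eqxx !orbT.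
have [X3q X3R] := Xq k3 m3 k3N.
have [X4q X4R] := Xq k4 m4 k4N.
have [P3q P3R] := Xq p3 mp3 p3N.
have [P4q P4R] := Xq p4 mp4 p4N.
have [X3D AX3 k3X3] := blkP (neqWN AW k3N).
have [X4D AX4 k4X4] := blkP (neqWN AW k4N).
have [P3D AP3 p3P3] := blkP (neqWN AW p3N).
have [P4D AP4 p4P4] := blkP (neqWN AW p4N).
have X34 : blk A k3 != blk A k4.
  apply/negP => /eqP E.
  have EK := uniqB X3D (QkD (KQ0 HK)) k34 k3X3 _ k3K k4K.
  rewrite E in EK; have := EK k4X4 => EK'.
  by apply: (WnotN AW); apply: (KN HK); rewrite -EK'.
have Hq : forall B, B \in quadat A -> [\/ B = R, B = blk A k3 | B = blk A k4].
  have sub : [set R; blk A k3; blk A k4] \subset quadat A.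
    apply/subsetP => B; rewrite !in_setU !in_set1 -!orbA => /orP[/eqP->|/orP[]/eqP->].
    - by rewrite in_set HRq AR.
    - exact: X3q.
    - exact: X4q.
  have c3 : #|[set R; blk A k3; blk A k4]| = 3.
    have -> : [set R; blk A k3; blk A k4] = R |: [set blk A k3; blk A k4].
      by apply/setP => B; rewrite !in_setU !in_set1 orbA.
    rewrite cardsU1 cards2 X34 in_setU !in_set1 negb_or (eq_sym R) X3R (eq_sym R) X4R.
    done.
  have : [set R; blk A k3; blk A k4] == quadat A by rewrite eqEcard sub c3 bW.
  move/eqP <- => B; rewrite !in_setU !in_set1 -!orbA => /orP[/eqP->|/orP[]/eqP->].
  - by constructor 1.
  - by constructor 2.
  - by constructor 3.
have Hq' : forall B, B \in quadat A -> [\/ B = R, B = blk A k4 | B = blk A k3].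
  by move=> B /Hq [] ->; [constructor 1|constructor 3|constructor 2].
have n3 := claim AW HR AR k3K k4K p3K' p4K' p34 HC3 HC4 k3C p3C k4C p4C Hq P4q P4R.
have p43 : p4 != p3 by rewrite eq_sym.
have n4 := claim AW HR AR k4K k3K p4K' p3K' p43 HC4 HC3 k4C p4C k3C p3C Hq' P3q P3R.
have [E|E|E] := Hq _ P3q.
- by move/eqP: P3R.
- by exfalso; move/negP: n3; apply; rewrite -E.
have k4p3 : k4 != p3 by apply/negP => /eqP E'; apply: (disj HK KK' k4K); rewrite E'.
have k3p4 : k3 != p4 by apply/negP => /eqP E'; apply: (disj HK KK' k3K); rewrite E'.
have [B1D k4B1 p3B1] := blkP k4p3.
have [B2D k3B2 p4B2] := blkP k3p4.
split.
  have := uniqB B1D X4D k4p3 k4B1 p3B1 k4X4; rewrite -E => /(_ p3P3) ->; exact: AP3.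
have [E'|E'|E'] := Hq _ P4q.
- by move/eqP: P4R.
- have := uniqB B2D X3D k3p4 k3B2 p4B2 k3X3; rewrite -E' => /(_ p4P4) ->; exact: AP4.
- by exfalso; move/negP: n4; apply; rewrite -E'.
Qed.

End KK4.


Section KK5.
Variables K K' : {set 'I_18}.
Hypothesis HK : Qk 0 = [set K; K'].
Hypothesis KK' : K != K'.
Let HKs : Qk 0 = [set K'; K].
Proof. by rewrite HK setUC. Qed.
Let KKs : K' != K.
Proof. by rewrite eq_sym. Qed.
Variables (Q : {set 'I_18}) (x0 : 'I_18).
Hypothesis HQ : Q \in quad.
Hypothesis Qx0 : Q :&: W = [set x0].
Hypothesis ZQ : Z K K' \subset Q.

Lemma x0W : x0 \in W.
Proof. have : x0 \in Q :&: W by rewrite Qx0 in_set1. by rewrite in_setI => /andP[]. Qed.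
Lemma x0Q : x0 \in Q.
Proof. have : x0 \in Q :&: W by rewrite Qx0 in_set1. by rewrite in_setI => /andP[]. Qed.

Lemma QNZ : Q :&: N = Z K K'.
Proof.
apply/eqP; rewrite eq_sym eqEcard (cardZ HK KK') cardBN // /c Qx0 cards1 /=.
rewrite andbT; apply/subsetP => z zZ; rewrite in_setI (subsetP ZQ) //.
exact: ZN zZ.
Qed.

Lemma QnotKK v : v \in Q -> v \in K :|: K' -> False.
Proof.
move=> vQ vKK; have vN : v \in N by apply: (subsetP (KKsubN HK)).
have : v \in Q :&: N by rewrite in_setI vQ vN.
by rewrite QNZ => /ZKK; rewrite vKK.
Qed.

Lemma x0notKK : x0 \notin K :|: K'.
Proof.
apply/negP => /(subsetP (KKsubN HK)) x0N.
exact: WnotN x0W x0N.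
Qed.

Lemma KKle B : B \in D -> x0 \in B -> #|B :&: K| <= 1 /\ #|B :&: K'| <= 1.
Proof.
move=> BD x0B; split; apply: inter1 => //; try exact: QkD (KQ0 HK); try exact: QkD (K'Q0 HK).
  apply/negP => /eqP E; move/negP: x0notKK; apply; rewrite in_setU -E x0B //.
apply/negP => /eqP E; move/negP: x0notKK; apply; rewrite in_setU -E x0B orbT //.
Qed.

Lemma Rprop R : R \in quadat x0 -> R != Q ->
  [/\ R \in Qk 2, #|R :&: K| = 1 & #|R :&: K'| = 1].
Proof.
move=> HR RQ.
have lcx := @lc_split x0 (K :|: K') x0notKK; rewrite (cardKK HK KK') in lcx.
have tri_le : \sum_(B in triat x0) #|B :&: (K :|: K')| <= 4.
  rewrite -[X in _ <= X](aW x0W) /a /alpha_x -/(triat x0) -sum1_card.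
  apply: leq_sum => B; rewrite in_set => /andP[HBt _].
  have : #|B :&: (K :|: K')| <= #|B :&: N|.
    by apply: subset_leq_card; apply: setIS; exact: KKsubN HK.
  have := cardsIC B; rewrite (triP HBt).2 -/(c B).
  case: (cT HBt) => ->; move: #|B :&: (K :|: K')| #|B :&: N| => u v; clear; lia.
pose f B := #|B :&: (K :|: K')|.
pose g B := ((B != Q) + (B != Q))%N.
have fle : forall B, B \in quadat x0 -> f B <= g B.
  move=> B; rewrite in_set => /andP[HBq x0B]; rewrite /f /g.
  case: (eqVneq B Q) => [->|BQ] /=.
    rewrite leqn0 cards_eq0; apply/eqP/setP => v; rewrite in_set0 in_setI.
    by apply/negP => /andP[vQ vKK]; apply: (QnotKK vQ vKK).
  have [h1 h2] := KKle (quadP HBq).1 x0B.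
  rewrite setIUr; have := cardsU (B :&: K) (B :&: K').
  move: #|B :&: K :|: B :&: K'| #|B :&: K| #|B :&: K'| #|B :&: K :&: (B :&: K')| h1 h2 => u v w t; clear; lia.
have sg : \sum_(B in quadat x0) g B = 4.
  rewrite /g big_split /= -card_sum.
  have -> : #|[set x in quadat x0 | x != Q]| = 2.
    have -> : [set x in quadat x0 | x != Q] = quadat x0 :\ Q.
      by apply/setP => x; rewrite in_setD1 in_set andbC.
    have := cardsD1 Q (quadat x0); rewrite bW ?x0W // in_set HQ x0Q /=.
    by move: #|quadat x0 :\ Q| => u; clear; lia.
  done.
have sf : \sum_(B in quadat x0) g B <= \sum_(B in quadat x0) f B.
  rewrite sg; move: lcx tri_le; rewrite /f.
  move: (\sum_(B in triat x0) #|B :&: (K :|: K')|) (\sum_(B in quadat x0) #|B :&: (K :|: K')|) => u v; clear; lia.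
have fR := sum_eq_le fle sf HR; rewrite /f /g RQ /= in fR.
have [h1 h2] := KKle (quadP (setIdP HR).1).1 (setIdP HR).2.
have hK : #|R :&: K| = 1 /\ #|R :&: K'| = 1.
  move: fR; rewrite setIUr; have := cardsU (R :&: K) (R :&: K').
  move: #|R :&: K :|: R :&: K'| #|R :&: K| #|R :&: K'| #|R :&: K :&: (R :&: K')| h1 h2 => u v w t; clear; lia.
have [HRq x0R] := setIdP HR.
have sub : R :&: N \subset R :&: (K :|: K').
  apply/subsetP => v; rewrite !in_setI => /andP[vR vN]; rewrite vR /=.
  apply: contraT => vKK.
  have vZ : v \in Z K K' by rewrite inE vN vKK.
  have vQ := subsetP ZQ v vZ.
  have x0v : x0 != v by apply: neqWN x0W vN.
  have E := uniqB (quadP HRq).1 (quadP HQ).1 x0v x0R vR x0Q vQ.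
  by rewrite E eqxx in RQ.
have sub2 : R :&: (K :|: K') \subset R :&: N by apply: setIS; exact: KKsubN HK.
have EN : #|R :&: N| = 2.
  have := subset_leq_card sub; have := subset_leq_card sub2; move: fR.
  move: #|R :&: (K :|: K')| #|R :&: N| => u v; clear; lia.
split => //; last by case: hK.
  rewrite in_set HRq /=; have := cardBN HRq; rewrite EN.
  have := c_le2 HRq; move: (c R) => u; clear => h1 h2; apply/eqP; lia.
by case: hK.
Qed.


Lemma pickA R : R \in quadat x0 -> R != Q ->
  exists A, [/\ A \in R, A \in W & A != x0].
Proof.
move=> HR RQ; have [HR2 _ _] := Rprop HR RQ.
have [HRq x0R] := setIdP HR.
have := cardsD1 x0 (R :&: W); rewrite in_setI x0R x0W -/(c R) (Qkc HR2) /=.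
move=> /esym/eqP; rewrite add1n eqSS => /cards1P [A EA].
have : A \in (R :&: W) :\ x0 by rewrite EA in_set1.
by rewrite in_setD1 in_setI => /and3P[Ax0 AR AW]; exists A.
Qed.

Lemma final : False.
Proof.
have x0W' := x0W.
have c2 : #|quadat x0 :\ Q| = 2.
  have := cardsD1 Q (quadat x0); rewrite bW // in_set HQ x0Q /=.
  by move: #|quadat x0 :\ Q| => u; clear; lia.
have /eqP/cards2P [R1 [R2 [R12 ER]]] := c2.
have R1in : R1 \in quadat x0 :\ Q by rewrite ER !inE eqxx.
have R2in : R2 \in quadat x0 :\ Q by rewrite ER !inE eqxx orbT.
move: R1in R2in; rewrite !in_setD1 => /andP[R1Q HR1] /andP[R2Q HR2].
have [HR1q x0R1] := setIdP HR1; have [HR2q x0R2] := setIdP HR2.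
have [Q21 K1 K1'] := Rprop HR1 R1Q.
have [Q22 K2 K2'] := Rprop HR2 R2Q.
have [A1 [A1R A1W A1x]] := pickA HR1 R1Q.
have [A2 [A2R A2W A2x]] := pickA HR2 R2Q.
have quadx0 : forall B, B \in quadat x0 -> [\/ B = Q, B = R1 | B = R2].
  move=> B HB; case: (eqVneq B Q) => [->|BQ]; first by constructor 1.
  have : B \in quadat x0 :\ Q by rewrite in_setD1 BQ HB.
  by rewrite ER in_set2 => /orP[]/eqP->; [constructor 2|constructor 3].
have [k1 Ek1] := cards1P (introT eqP K1).
have [k2 Ek2] := cards1P (introT eqP K2).
have k1R : k1 \in R1 :&: K by rewrite Ek1 in_set1.
have k2R : k2 \in R2 :&: K by rewrite Ek2 in_set1.
move: k1R k2R; rewrite !in_setI => /andP[k1R1 k1K] /andP[k2R2 k2K].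
have k12 : k1 != k2.
  apply/negP => /eqP E.
  have x0k1 : x0 != k1 by apply: neqWN x0W (KN HK k1K).
  have := uniqB (quadP HR1q).1 (quadP HR2q).1 x0k1 x0R1 k1R1 x0R2; rewrite E => /(_ k2R2) E12.
  by rewrite E12 eqxx in R12.
have cK2 : #|K :\: (R1 :|: R2)| = 2.
  rewrite cardsD (cardK HK).
  have -> : K :&: (R1 :|: R2) = [set k1; k2].
    rewrite setIUr (setIC K R1) (setIC K R2) Ek1 Ek2 //.
  by rewrite cards2 k12.
have /eqP/cards2P [k3 [k4 [k34 E34]]] := cK2.
have k3in : k3 \in K :\: (R1 :|: R2) by rewrite E34 !inE eqxx.
have k4in : k4 \in K :\: (R1 :|: R2) by rewrite E34 !inE eqxx orbT.
move: k3in k4in; rewrite !in_setD !in_setU !negb_or.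
move=> /andP[/andP[k3R1 k3R2] k3K] /andP[/andP[k4R1 k4R2] k4K].
have [C3 [p3 [HC3 k3C p3C p3K']]] := partner HK KK' k3K.
have [C4 [p4 [HC4 k4C p4C p4K']]] := partner HK KK' k4K.
have notR : forall R, R \in Qk 2 -> R \in quadat x0 -> forall p C k,
    p \in K' -> C \in Qk 2 -> p \in C -> k \in C -> k \notin R -> p \notin R.
  move=> R HR2' _ p C k pK' HC pC kC kR; apply/negP => pR.
  have := Q2uniq HKs KKs pK' HR2' HC pR pC => E.
  by move: kR; rewrite E kC.
have p34 : p3 != p4.
  apply/negP => /eqP E; rewrite -E in p4C.
  have EC := Q2uniq HKs KKs p3K' HC3 HC4 p3C p4C.
  rewrite -EC in k4C.
  apply: (share2 (QkD HC3) (QkD (KQ0 HK)) k34 k3C k4C k3K k4K).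
  by rewrite (Qkc HC3) (Qkc (KQ0 HK)).
have G : forall R, R = R1 \/ R = R2 ->
    forall s, s \in [set k3; k4; p3; p4] -> s \notin R /\ blk x0 s \in tri.
  move=> R HRR s; rewrite !in_setU !in_set1 => Hs.
  have sKK : s \in K :|: K'.
    by case/orP: Hs => [/orP[/orP[]|]|] /eqP ->; rewrite in_setU ?k3K ?k4K ?p3K' ?p4K' ?orbT.
  have sN : s \in N by apply: (subsetP (KKsubN HK)).
  have sR12 : s \notin R1 /\ s \notin R2.
    case/orP: Hs => [/orP[/orP[]|]|] /eqP ->.
    - by [].
    - by [].
    - by split; [apply: (notR R1 Q21 HR1 p3 C3 k3)|apply: (notR R2 Q22 HR2 p3 C3 k3)].
    - by split; [apply: (notR R1 Q21 HR1 p4 C4 k4)|apply: (notR R2 Q22 HR2 p4 C4 k4)].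
  split; first by case: HRR => ->; case: sR12.
  have [BD x0B sB] := blkP (neqWN x0W sN).
  case: (Hsz BD) => h; first by rewrite /tri /triangles in_set BD h.
  exfalso.
  have HBq : blk x0 s \in quadat x0 by rewrite in_set inE BD h x0B.
  case: (quadx0 _ HBq) => E; rewrite E in sB.
  - by apply: (QnotKK sB sKK).
  - by case: sR12; rewrite sB.
  - by case: sR12; rewrite sB.
have G1 := G R1 (or_introl erefl).
have G2 := G R2 (or_intror erefl).
have [a1 b1] := atA HK KK' A1W x0W' A1x Q21 A1R x0R1 k3K k4K k34 p3K' p4K' p34 HC3 HC4 k3C p3C k4C p4C G1.
have [a2 b2] := atA HK KK' A2W x0W' A2x Q22 A2R x0R2 k3K k4K k34 p3K' p4K' p34 HC3 HC4 k3C p3C k4C p4C G2.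
have A12 : A1 != A2.
  have x0A1 : x0 != A1 by rewrite eq_sym.
  apply/negP => /eqP E; rewrite -E in A2R.
  have E12 := uniqB (quadP HR1q).1 (quadP HR2q).1 x0A1 x0R1 A1R x0R2 A2R.
  by rewrite E12 eqxx in R12.
have k4p3 : k4 != p3 by apply/negP => /eqP E'; apply: (disj HK KK' k4K); rewrite E'.
have k3p4 : k3 != p4 by apply/negP => /eqP E'; apply: (disj HK KK' k3K); rewrite E'.
have [B1D k4B1 p3B1] := blkP k4p3.
have [B2D k3B2 p4B2] := blkP k3p4.
have E := uniqB B1D B2D A12 a1 a2 b1 b2.
have k3B1 : k3 \in blk k4 p3 by rewrite E.
have EK := uniqB B1D (QkD (KQ0 HK)) k34 k3B1 k4B1 k3K k4K.
by apply: (WnotN A1W); apply: (KN HK); rewrite -EK.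
Qed.

End KK5.


Lemma main_false : False.
Proof.
have /eqP/cards2P [K [K' [KK' HK]]] := cardQ0.
have cZ := cardZ HK KK'.
have /card_gt1P [z1 [z2 [z1Z z2Z z12]]] : 1 < #|Z K K'| by rewrite cZ.
have [HQ cQ ZQ] := Qblk HK KK' z1Z z2Z z12.
have /cards1P [x0 Ex0] : #|blk z1 z2 :&: W| == 1 by rewrite -/(c _) cQ.
exact: (final HK KK' HQ Ex0 ZQ).
Qed.

End Main.

Theorem mainTheorem17 (D : {set {set 'I_18}}) :
  is_K34_decomp D -> alpha D = 13 ->
  (t_count D 0, t_count D 1, t_count D 2, t_count D 3) <> (0, 0, 11, 2).
Proof.
move=> [Hsz Hedge] Ha E; case: E => h0 h1 h2 h3.
exact: (main_false Hsz Hedge Ha h0 h1 h2 h3).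
Qed.
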